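(* Let $c\ge 1$, let $n\ge 9$, and let $\bar q$ be a positive integer divisible by $8$ with $\bar q\le 4\sqrt n$. Consider a sequence of coordinates $k_1,k_2,\dots$, each chosen independently and uniformly at random from $\{1,\dots,n\}$, and let $I$ be any block of $\bar q/4$ consecutive terms of it. Then with probability at least $1-\frac13 n^{-2c}$, there are at most $b_3=1+\ln 3+2c\ln n$ reappearing coordinates among the terms of $I$.
   Context: A term of the block is reappearing if the same coordinate already occurs at an earlier position within the block. *)

(* Defs.v *)
From HB Require Import structures.
From mathcomp Require Import all_boot all_order all_algebra.
From mathcomp Require Import reals exp.
Set Implicit Arguments. Unset Strict Implicit. Unset Printing Implicit Defensive.
Import Order.TTheory GRing.Theory Num.Theory.
Local Open Scope ring_scope.

(* A finite prefix k_0, ..., k_{N-1} of the random coordinate sequence;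
   coordinates {1,...,n} are represented by 'I_n = {0,...,n-1}. *)

Definition reappearing (n N : nat) (k : {ffun 'I_N -> 'I_n}) (s m : nat) : nat :=
  #|[set j : 'I_N | (s <= j < s + m)%N &&
      [exists i : 'I_N, [&& (s <= i)%N, (i < j)%N & k i == k j]]]|.

(* Uniform probability of an event on sequences in {ffun 'I_N -> 'I_n}
   (each coordinate independent and uniform on n values). *)
Definition unif_prob (R : realType) (n N : nat) (E : pred {ffun 'I_N -> 'I_n}) : R :=
  #|[set k | E k]|%:R / #|{ffun 'I_N -> 'I_n}|%:R.

(* Main.v *)
Require Import Defs.
From HB Require Import structures.
From mathcomp Require Import all_boot all_order all_algebra.
From mathcomp Require Import reals sequences exp ring lra.
Set Implicit Arguments. Unset Strict Implicit. Unset Printing Implicit Defensive.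
Import Order.TTheory GRing.Theory Num.Theory.
Lemma exists_sub (T : finType) (S : {set T}) r :
  (r <= #|S|)%N -> exists2 J : {set T}, J \subset S & #|J| == r.
Proof.
move=> H; move: S H; suff : forall d (S : {set T}), #|S| = (r + d)%N -> exists2 J : {set T}, J \subset S & #|J| == r.
  by move=> P S H; apply: (P (#|S| - r)%N); rewrite subnKC.
elim=> [|d IH] S HS; first by exists S; rewrite ?HS ?addn0.
have : (0 < #|S|)%N by rewrite HS addnS.
rewrite card_gt0 => /set0Pn[x xS].
have [|J JS Jr] := IH (S :\ x); first by move: (cardsD1 x S); rewrite xS HS addnS add1n => -[].
by exists J => //; apply: subset_trans JS (subsetDl _ _).
Qed.

Section Comb.
Variables (n N s m : nat).
Hypothesis hsm : (s + m <= N)%N.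

Definition reapset (k : {ffun 'I_N -> 'I_n}) : {set 'I_N} :=
  [set j : 'I_N | (s <= j < s + m)%N &&
      [exists i : 'I_N, [&& (s <= i)%N, (i < j)%N & k i == k j]]].

Lemma reapsetE k : reappearing k s m = #|reapset k|.
Proof. by []. Qed.

Definition ptr (k : {ffun 'I_N -> 'I_n}) (j : 'I_N) : 'I_N :=
  odflt j [pick i : 'I_N | [&& (s <= i)%N, (i < j)%N & k i == k j]].

Lemma ptrP k j : j \in reapset k ->
  [&& (s <= ptr k j)%N, (ptr k j < j)%N, k (ptr k j) == k j & (j < s + m)%N].
Proof.
rewrite inE => /andP[/andP[_ ->] /existsP[i Hi]].
rewrite /ptr; case: pickP => [i' /and3P[-> -> ->] //|/(_ i)]; by rewrite Hi.
Qed.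

Lemma card_inr (A B : finType) (P : pred B) :
  #|[pred x : A + B | if x is inr b then P b else false]| = #|P|.
Proof.
have inj : injective (@inr A B) by move=> x y [].
rewrite -(card_image inj P); apply: eq_card => -[a|b] /=.
  by apply/esym/imageP => -[].
by rewrite mem_image.
Qed.

Lemma card_inl (A B : finType) :
  #|[pred x : A + B | if x is inl _ then true else false]| = #|A|.
Proof.
have inj : injective (@inl A B) by move=> x y [].
rewrite -(card_image inj A); apply: eq_card => -[a|b] /=.
  by rewrite mem_image.
by apply/esym/imageP => -[].
Qed.

Lemma card_block : #|[set j : 'I_N | (s <= j < s + m)%N]| = m.
Proof.
elim: m hsm => [|m' IH] H.
  by apply: eq_card0 => j; rewrite inE addn0 ltnNge andbN.
have Hlt : (s + m' < N)%N by rewrite addnS in H.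
have -> : [set j : 'I_N | (s <= j < s + m'.+1)%N] = Ordinal Hlt |: [set j : 'I_N | (s <= j < s + m')%N].
  apply/setP => j; rewrite !inE -val_eqE /= addnS ltnS [(j <= _)%N]leq_eqVlt.
  by case: (eqVneq (val j) (s + m')) => [->|_] /=; rewrite ?leq_addr.
by rewrite cardsU1 inE ltnn andbF IH // ltnW.
Qed.

Definition Fam (J : {set 'I_N}) (j : 'I_N) : pred ('I_n + 'I_N) :=
  if j \in J then [pred x : 'I_n + 'I_N | if x is inr i then (s <= i < s + m)%N else false]
  else [pred x : 'I_n + 'I_N | if x is inl _ then true else false].

Definition enc (J : {set 'I_N}) (k : {ffun 'I_N -> 'I_n}) : {ffun 'I_N -> 'I_n + 'I_N} :=
  [ffun j => if j \in J then inr (ptr k j) else inl (k j)].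

Lemma count_J (J : {set 'I_N}) :
  (#|[set k : {ffun 'I_N -> 'I_n} | J \subset reapset k]| <= m ^ #|J| * n ^ (N - #|J|))%N.
Proof.
set A := [set k : {ffun 'I_N -> 'I_n} | J \subset reapset k].
have inj : {in A &, injective (enc J)}.
  move=> k1 k2; rewrite !inE => /subsetP H1 /subsetP H2 E.
  suff H : forall t (j : 'I_N), (j < t)%N -> k1 j = k2 j.
    by apply/ffunP => j; apply: (H j.+1).
  elim=> [//|t IH] j; rewrite ltnS leq_eqVlt => /orP[/eqP Ej|]; last exact: IH.
  move/ffunP/(_ j): E; rewrite !ffunE.
  case: ifP => jJ; last by case.
  case=> Ep.
  have /and4P[_ l1 /eqP e1 _] := ptrP (H1 _ jJ).
  have /and4P[_ l2 /eqP e2 _] := ptrP (H2 _ jJ).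
  by rewrite -e1 -e2 Ep IH // -Ej -Ep.
rewrite -(card_in_imset inj).
apply: (leq_trans (subset_leq_card (_ : enc J @: A \subset family (Fam J)))).
  apply/subsetP => g /imsetP[k]; rewrite inE => /subsetP Hk ->.
  apply/familyP => j; rewrite /Fam ffunE; case: ifP => jJ //=.
  rewrite inE /=; have /and4P[-> l _ l2] := ptrP (Hk _ jJ); exact: ltn_trans l l2.
rewrite card_family foldrE big_map big_enum /=.
rewrite (bigID (mem J)) /=.
rewrite (eq_bigr (fun => m)); last first.
  by move=> j jJ; rewrite /Fam jJ card_inr -[RHS]card_block; apply: eq_card => i; rewrite inE.
rewrite [X in (_ * X)%N](eq_bigr (fun => n)); last first.
  by move=> j /negbTE jJ; rewrite /Fam jJ card_inl card_ord.
rewrite !prod_nat_const.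
have hc : (N - #|J| = #|~: J|)%N by rewrite -{1}(card_ord N) -(cardsC J) addKn.
rewrite hc; apply: leq_mul => //; apply: eq_leq; congr (_ ^ _).
by apply: eq_card => j; rewrite !inE.
Qed.

Lemma reap_block k : reapset k \subset [set j : 'I_N | (s <= j < s + m)%N].
Proof. by apply/subsetP => j; rewrite !inE => /andP[]. Qed.

Lemma bad_count r :
  (#|[set k : {ffun 'I_N -> 'I_n} | (r <= #|reapset k|)%N]| <= 'C(m, r) * (m ^ r * n ^ (N - r)))%N.
Proof.
set D := [set J : {set 'I_N} | J \subset [set j : 'I_N | (s <= j < s + m)%N] & #|J| == r].
rewrite -sum1_card big_mkcond /=.
apply: (@leq_trans (\sum_(k : {ffun 'I_N -> 'I_n}) \sum_(J in D) (J \subset reapset k : nat))).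
  apply: leq_sum => k _; rewrite inE; case: ifP => // /exists_sub [J JS Jr].
  have JD : J \in D by rewrite inE Jr (subset_trans JS (reap_block k)).
  by rewrite (bigD1 J) //= JS.
rewrite exchange_big /=.
apply: (@leq_trans (\sum_(J in D) (m ^ r * n ^ (N - r)))); last first.
  by rewrite sum_nat_const cards_draws card_block.
apply: leq_sum => J; rewrite inE => /andP[_ /eqP <-].
apply: leq_trans (count_J J).
apply: eq_leq; rewrite -sum1_card [RHS]big_mkcond /=; apply: eq_bigr => k _.
by rewrite inE; case: (J \subset _).
Qed.
End Comb.
Lemma leq_expn a b e : (a <= b)%N -> (a ^ e <= b ^ e)%N.
Proof. by move=> ab; elim: e => [//|e IH]; rewrite !expnS leq_mul. Qed.

Lemma ffact_le_exp b a : (a ^_ b <= a ^ b)%N.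
Proof.
elim: b a => [//|b IH] a; rewrite ffactnS expnS leq_mul2l.
by rewrite (leq_trans (IH _)) ?orbT // leq_expn // leq_pred.
Qed.

Lemma three_fact r : (5 <= r)%N -> (3 ^ r.-1 <= r`!)%N.
Proof.
move=> H; rewrite -(subnK H); elim: (r - 5)%N => [//|k IH].
rewrite !addSn /= factS [in X in (X <= _)%N](addnS k 4) expnS; apply: leq_mul.
  by rewrite ltnS (leq_trans _ (leq_addl k 5)).
by move: IH; rewrite (addnS k 4).
Qed.

Lemma key_nat m n N r : (m * m <= n)%N -> (m <= N)%N ->
  ('C(m, r) * (m ^ r * n ^ (N - r)) * r`! <= n ^ N)%N.
Proof.
move=> mn mN; have [rm|mr] := leqP r m; last by rewrite bin_small.
rewrite mulnAC bin_ffact mulnA.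
apply: (@leq_trans (m ^ r * m ^ r * n ^ (N - r))).
  by rewrite leq_mul2r leq_mul2r ffact_le_exp !orbT.
rewrite -expnMn -{2}(subnKC (leq_trans rm mN)) expnD leq_mul2r.
by rewrite leq_expn ?orbT.
Qed.

Local Open Scope ring_scope.

Lemma expR1_le3 (R : realType) : expR (1 : R) <= 3.
Proof.
have h1 : 5/6 <= expR (- (1/6) : R) by have := expR_ge1Dx (- (1/6) : R); lra.
have h2 := expRxMexpNx_1 (1/6 : R).
have h0 := expR_gt0 (1/6 : R).
have h3 : expR (1/6 : R) <= 6/5 by nra.
have e6 : 6%:R * (1/6) = 1 :> R by rewrite mul1r divff // pnatr_eq0.
rewrite -[X in expR X]e6 expRM_natl.
apply: (le_trans (lerXn2r 6 _ _ h3)); rewrite ?nnegrE; [exact: ltW | lra |].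
rewrite !exprS expr0; lra.
Qed.

Lemma ln3_ge1 (R : realType) : 1 <= ln (3 : R).
Proof.
rewrite -[X in X <= _](@expRK R) ler_ln ?posrE ?expR_gt0 //; exact: expR1_le3.
Qed.


Theorem corollary1 (R : realType) (c : R) (n qbar N s : nat) :
  1 <= c -> (9 <= n)%N -> (0 < qbar)%N -> (8 %| qbar)%N ->
  (qbar%:R <= 4 * Num.sqrt (n%:R) :> R) ->
  (s + qbar %/ 4 <= N)%N ->
  1 - 3^-1 * (n%:R) `^ (- (2 * c)) <=
  @unif_prob R n N (fun k => (@reappearing n N k s (qbar %/ 4))%:R
                            <= 1 + ln 3 + 2 * c * ln (n%:R) :> R).
Proof.
move=> c1 n9 q0 q8 hq hN.
set m := (qbar %/ 4)%N in hN *.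
have q4 : qbar = (m * 4)%N by rewrite divnK // (dvdn_trans _ q8).
have mm : (m * m <= n)%N.
  have hm : m%:R <= Num.sqrt (n%:R) :> R by move: hq; rewrite q4 natrM => h; lra.
  have : (m%:R)^+2 <= (n%:R : R).
    rewrite -(sqr_sqrtr (ler0n _ n)); apply: lerXn2r; rewrite ?nnegrE ?sqrtr_ge0 //.
  by rewrite -natrX ler_nat mulnn.
have mN : (m <= N)%N by apply: leq_trans (leq_addl s m) hN.
set b3 := 1 + ln 3 + 2 * c * ln (n%:R).
have l3 := ln3_ge1 R.
have ln1 : 1 <= ln (n%:R : R).
  apply: (le_trans l3); rewrite ler_ln ?posrE ?ltr0n ?ler_nat //; first exact: leq_trans _ n9.
  exact: leq_trans _ n9.
have b4 : 4 <= b3 by rewrite /b3; nra.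
set t := Num.truncn b3.
have br : b3 < t%:R + 1 by rewrite -mulrSr; exact: truncnS_gt.
have r5 : (5 <= t.+1)%N.
  have : (4%:R : R) < t.+1%:R by rewrite mulrSr; lra.
  by rewrite ltr_nat.
set E := (fun k : {ffun 'I_N -> 'I_n} => (reappearing k s m)%:R <= b3).
have hsub : ~: [set k | E k] \subset [set k | (t.+1 <= #|reapset s m k|)%N].
  apply/subsetP => k; rewrite !inE /E -ltNge reapsetE => h.
  by rewrite truncn_lt_nat // (le_trans _ b4).
have hbad : (#|~: [set k | E k]| * t.+1`! <= n ^ N)%N.
  apply: leq_trans (leq_mul (subset_leq_card hsub) (leqnn _)) _.
  apply: leq_trans (leq_mul (bad_count n hN t.+1) (leqnn _)) _.
  exact: key_nat.
have card_all : #|{ffun 'I_N -> 'I_n}| = (n ^ N)%N by rewrite card_ffun !card_ord.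
have hC := cardsC [set k | E k]; rewrite card_ffun !card_ord in hC.
rewrite /unif_prob card_all -hC natrD.
have n0 : (0 < n)%N by apply: leq_trans _ n9.
set T := ((n ^ N)%N)%:R : R.
have T0 : 0 < T by rewrite ltr0n expn_gt0 n0.
set P := (n%:R : R) `^ (2 * c).
have P0 : 0 < P by apply: powR_gt0; rewrite ltr0n.
have h3P : 3 * P <= (t.+1`!)%:R :> R.
  have -> : 3 * P = expR (b3 - 1).
    rewrite /P /powR pnatr_eq0 (negbTE (lt0n_neq0 n0)) -[X in X * _]lnK ?posrE // -expRD.
    by congr expR; rewrite /b3; ring.
  apply: (@le_trans _ _ ((3 ^ t)%N%:R)); last by rewrite ler_nat; exact: three_fact.
  rewrite natrX -[X in X ^+ _]lnK ?posrE // -expRM_natl ler_expR.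
  have : 0 <= (t%:R : R) by [].
  nra.
set B := (#|~: [set k | E k]|)%:R : R.
set G := (#|[set k | E k]|)%:R : R.
have hB : B * (3 * P) <= T.
  apply: le_trans (_ : B * (t.+1`!)%:R <= T).
    by apply: ler_wpM2l => //; rewrite ler0n.
  by rewrite -natrM ler_nat.
have TGB : T = G + B by rewrite /T -hC natrD.
rewrite TGB in hB T0.
rewrite powRN.
have GB0 : 0 < G + B by [].
rewrite -/P.
have sum1 : G / (G + B) + B / (G + B) = 1 by rewrite -mulrDl divff ?gt_eqF.
have : B / (G + B) <= 3^-1 * P^-1.
  rewrite ler_pdivrMr // -invfM ler_pdivlMl ?mulr_gt0 //.
  by rewrite mulrC.
lra.
Qed.
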